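(* Let $a<b$, $\alpha>0$, $m=\frac{a+b}{2}$. Let $h:[a,b]\to\mathbb{R}$ be strictly increasing and continuously differentiable. Let $f$ be differentiable on an open interval $I\supseteq[h(a),h(b)]$ with $f'$ integrable on $[h(a),h(b)]$ and $|f'|$ convex on $[h(a),h(b)]$, and let $g:[a,b]\to\mathbb{R}$ be continuous. Put $D=h(b)-h(a)$, $U=h(m)-h(a)$, $V=h(b)-h(m)$. Then $$\Big|f(h(m))\Big[(J^{\alpha}_{m^-,h}g)(a)+(J^{\alpha}_{m^+,h}g)(b)\Big]-\Big[(J^{\alpha}_{m^-,h}(g\cdot(f\circ h)))(a)+(J^{\alpha}_{m^+,h}(g\cdot(f\circ h)))(b)\Big]\Big|$$ $$\le \frac{\|g\|_{\infty,[a,m]}}{D\,\Gamma(\alpha+1)}\Big\{|f'(h(a))|\Big[\frac{D\,U^{\alpha+1}}{\alpha+1}-\frac{U^{\alpha+2}}{\alpha+2}\Big]+|f'(h(b))|\frac{U^{\alpha+2}}{\alpha+2}\Big\}$$ $$+\frac{\|g\|_{\infty,[m,b]}}{D\,\Gamma(\alpha+1)}\Big\{|f'(h(b))|\Big[\frac{D\,V^{\alpha+1}}{\alpha+1}-\frac{V^{\alpha+2}}{\alpha+2}\Big]+|f'(h(a))|\frac{V^{\alpha+2}}{\alpha+2}\Big\}.$$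
   Context: Generalized fractional integrals with respect to $h$: for $c<d$ in $[a,b]$ and integrable $\varphi$, $(J^{\alpha}_{c^+,h}\varphi)(x)=\frac{1}{\Gamma(\alpha)}\int_c^x (h(x)-h(t))^{\alpha-1}h'(t)\varphi(t)\,dt$ for $x\in(c,d]$, and $(J^{\alpha}_{d^-,h}\varphi)(x)=\frac{1}{\Gamma(\alpha)}\int_x^d (h(t)-h(x))^{\alpha-1}h'(t)\varphi(t)\,dt$ for $x\in[c,d)$. Thus $(J^{\alpha}_{m^-,h}\varphi)(a)=\frac{1}{\Gamma(\alpha)}\int_a^m (h(t)-h(a))^{\alpha-1}h'(t)\varphi(t)\,dt$ and $(J^{\alpha}_{m^+,h}\varphi)(b)=\frac{1}{\Gamma(\alpha)}\int_m^b (h(b)-h(t))^{\alpha-1}h'(t)\varphi(t)\,dt$. $g\cdot(f\circ h)$ denotes $t\mapsto g(t)f(h(t))$. For a subinterval $J\subseteq[a,b]$, $\|g\|_{\infty,J}=\sup_{t\in J}|g(t)|$. *)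

(* Defs.v *)
From Stdlib Require Import Reals Lra ClassicalEpsilon.
Open Scope R_scope.

(* The unique real satisfying P, if one exists (0 otherwise).  Used only for
   predicates with at most one solution (limits, least upper bounds). *)
Definition choose_R (P : R -> Prop) : R :=
  match excluded_middle_informative (exists x, P x) with
  | left H => proj1_sig (constructive_indefinite_description P H)
  | right _ => 0
  end.

(* Improper Riemann integral over the open interval (c,d): f is Riemann
   integrable on every [x,y] with c < x <= y < d, and the integral over [x,y]
   tends to l as x -> c+ and y -> d-. *)
Definition is_impint (f : R -> R) (c d l : R) : Prop :=
  (forall x y, c < x -> x <= y -> y < d -> inhabited (Riemann_integrable f x y)) /\
  forall eps, 0 < eps -> exists del, 0 < del /\
    forall x y (pr : Riemann_integrable f x y),
      c < x < c + del -> d - del < y < d -> Rabs (RiemannInt pr - l) < eps.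

Definition impint (f : R -> R) (c d : R) : R := choose_R (is_impint f c d).

Definition is_impint_inf (f : R -> R) (c l : R) : Prop :=
  (forall x y, c < x -> x <= y -> inhabited (Riemann_integrable f x y)) /\
  forall eps, 0 < eps -> exists del, 0 < del /\ exists M,
    forall x y (pr : Riemann_integrable f x y),
      c < x < c + del -> M < y -> Rabs (RiemannInt pr - l) < eps.

Definition Gamma (s : R) : R :=
  choose_R (is_impint_inf (fun t => Rpower t (s - 1) * exp (- t)) 0).

(* Generalized fractional integrals with respect to h (hd is h').
   J_left  alpha h hd phi c x = (J^alpha_{c+,h} phi)(x)
     = 1/Gamma(alpha) int_c^x (h(x)-h(t))^(alpha-1) h'(t) phi(t) dt
   J_right alpha h hd phi d x = (J^alpha_{d-,h} phi)(x)
     = 1/Gamma(alpha) int_x^d (h(t)-h(x))^(alpha-1) h'(t) phi(t) dt *)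
Definition J_left (alpha : R) (h hd phi : R -> R) (c x : R) : R :=
  / Gamma alpha *
  impint (fun t => Rpower (h x - h t) (alpha - 1) * hd t * phi t) c x.

Definition J_right (alpha : R) (h hd phi : R -> R) (d x : R) : R :=
  / Gamma alpha *
  impint (fun t => Rpower (h t - h x) (alpha - 1) * hd t * phi t) x d.

Definition sup_norm (g : R -> R) (c d : R) : R :=
  choose_R (is_lub (fun y => exists t, c <= t <= d /\ y = Rabs (g t))).

Definition cont_on (f : R -> R) (c d : R) : Prop :=
  forall t, c <= t <= d -> forall eps, 0 < eps -> exists del, 0 < del /\
    forall s, c <= s <= d -> Rabs (s - t) < del -> Rabs (f s - f t) < eps.

Definition deriv_within (f : R -> R) (c d t l : R) : Prop :=
  forall eps, 0 < eps -> exists del, 0 < del /\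
    forall s, c <= s <= d -> s <> t -> Rabs (s - t) < del ->
      Rabs ((f s - f t) / (s - t) - l) < eps.

Definition convex_on (F : R -> R) (c d : R) : Prop :=
  forall x y lam, c <= x <= d -> c <= y <= d -> 0 <= lam <= 1 ->
    F (lam * x + (1 - lam) * y) <= lam * F x + (1 - lam) * F y.

(* Main.v *)
Require Import Defs.
From Stdlib Require Import Reals Lra Lia ClassicalEpsilon.
From Coquelicot Require Import Coquelicot.
Open Scope R_scope.

Lemma choose_R_eq (P : R -> Prop) l : P l -> (forall l', P l' -> l' = l) -> choose_R P = l.
Proof.
  intros Hl Hu. unfold choose_R.
  destruct (excluded_middle_informative (exists x, P x)) as [H|H].
  - apply Hu. exact (proj2_sig (constructive_indefinite_description P H)).
  - exfalso. apply H. exists l. exact Hl.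
Qed.

Lemma choose_R_P (P : R -> Prop) : (exists x, P x) -> P (choose_R P).
Proof.
  intros He. unfold choose_R.
  destruct (excluded_middle_informative (exists x, P x)) as [H|H].
  - exact (proj2_sig (constructive_indefinite_description P H)).
  - contradiction.
Qed.

Lemma cont_eps (f : R -> R) t :
  continuity_pt f t <-> (forall eps, 0 < eps -> exists del, 0 < del /\
     forall s, Rabs (s - t) < del -> Rabs (f s - f t) < eps).
Proof.
  split.
  - intros H eps He. destruct (H eps He) as [alp [Ha Hx]].
    exists alp. split; [lra|]. intros s Hs.
    destruct (Req_dec s t) as [->|Hne].
    + rewrite Rminus_diag, Rabs_R0. exact He.
    + apply (Hx s). split; [split; [exact I| auto]| exact Hs].
  - intros H eps He. destruct (H eps He) as [del [Hd Hx]].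
    exists del. split; [lra|]. intros s [_ Hs]. apply Hx. exact Hs.
Qed.

Lemma cont_on_int (f : R -> R) a b t : cont_on f a b -> a < t < b -> continuity_pt f t.
Proof.
  intros H Ht. apply cont_eps. intros eps He.
  destruct (H t ltac:(lra) eps He) as [del [Hd Hx]].
  exists (Rmin del (Rmin (t - a) (b - t))). split.
  - apply Rmin_pos; [lra| apply Rmin_pos; lra].
  - intros s Hs. apply Hx.
    + pose proof (Rmin_r del (Rmin (t - a) (b - t))).
      pose proof (Rmin_l (t - a) (b - t)). pose proof (Rmin_r (t - a) (b - t)).
      apply Rabs_def2 in Hs. lra.
    + pose proof (Rmin_l del (Rmin (t - a) (b - t))). lra.
Qed.

Lemma deriv_within_int (f : R -> R) a b t l :
  deriv_within f a b t l -> a < t < b -> derivable_pt_lim f t l.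
Proof.
  intros H Ht eps He. destruct (H eps He) as [del [Hd Hx]].
  assert (Hp : 0 < Rmin del (Rmin (t - a) (b - t))).
  { apply Rmin_pos; [lra| apply Rmin_pos; lra]. }
  exists (mkposreal _ Hp). intros hh Hh0 Hh. simpl in Hh.
  pose proof (Rmin_l del (Rmin (t - a) (b - t))).
  pose proof (Rmin_r del (Rmin (t - a) (b - t))).
  pose proof (Rmin_l (t - a) (b - t)). pose proof (Rmin_r (t - a) (b - t)).
  apply Rabs_def2 in Hh as Hh'.
  replace hh with ((t + hh) - t) at 2 by ring.
  apply Hx.
  - lra.
  - lra.
  - replace (t + hh - t) with hh by ring. lra.
Qed.

Lemma deriv_within_cont (f : R -> R) a b t l :
  deriv_within f a b t l -> forall eps, 0 < eps -> exists del, 0 < del /\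
    forall s, a <= s <= b -> Rabs (s - t) < del -> Rabs (f s - f t) < eps.
Proof.
  intros H eps He. destruct (H 1 Rlt_0_1) as [del [Hd Hx]].
  exists (Rmin del (eps / (Rabs l + 1))). split.
  { apply Rmin_pos; [lra|]. apply Rdiv_lt_0_compat; [lra|]. pose proof (Rabs_pos l); lra. }
  intros s Hs Hst.
  destruct (Req_dec s t) as [->|Hne].
  { rewrite Rminus_diag, Rabs_R0. exact He. }
  pose proof (Rmin_l del (eps / (Rabs l + 1))).
  pose proof (Rmin_r del (eps / (Rabs l + 1))).
  specialize (Hx s Hs Hne ltac:(lra)).
  assert (Hst0 : s - t <> 0) by lra.
  replace (f s - f t) with (((f s - f t) / (s - t) - l) * (s - t) + l * (s - t)) by (field; auto).
  eapply Rle_lt_trans. apply Rabs_triang.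
  rewrite !Rabs_mult.
  assert (0 < Rabs (s - t)) by (apply Rabs_pos_lt; auto).
  assert (Rabs l + 1 > 0) by (pose proof (Rabs_pos l); lra).
  assert (Rabs (s - t) * (Rabs l + 1) < eps).
  { apply Rlt_le_trans with (eps / (Rabs l + 1) * (Rabs l + 1)).
    apply Rmult_lt_compat_r; lra. right; field; lra. }
  pose proof (Rabs_pos l). nra.
Qed.

Lemma Rabs_def2b a b : Rabs a <= b -> - b <= a <= b.
Proof. unfold Rabs. destruct (Rcase_abs a); intros; lra. Qed.

Definition IMP (F : R -> R) (c d l : R) : Prop :=
  (forall x y, c < x -> x <= y -> y < d -> ex_RInt F x y) /\
  forall eps, 0 < eps -> exists del, 0 < del /\ del <= (d - c) / 2 /\
    forall x y, c < x < c + del -> d - del < y < d -> Rabs (RInt F x y - l) < eps.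

Lemma IMP_is F c d l : IMP F c d l -> is_impint F c d l.
Proof.
  intros [Hi Hl]. split.
  - intros x y Hx Hxy Hy. constructor. apply ex_RInt_Reals_0. apply Hi; auto.
  - intros eps He. destruct (Hl eps He) as [del [Hd [Hd2 H]]].
    exists del. split; auto. intros x y pr Hx Hy.
    rewrite <- (RInt_Reals F x y pr). apply H; auto.
Qed.

Lemma is_IMP F c d l : c < d -> is_impint F c d l -> IMP F c d l.
Proof.
  intros Hcd [Hi Hl]. split.
  - intros x y Hx Hxy Hy. destruct (Hi x y Hx Hxy Hy) as [pr].
    apply ex_RInt_Reals_1. exact pr.
  - intros eps He. destruct (Hl eps He) as [del [Hd H]].
    exists (Rmin del ((d - c) / 2)). split; [apply Rmin_pos; lra|]. split; [apply Rmin_r|].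
    intros x y Hx Hy.
    pose proof (Rmin_l del ((d - c) / 2)). pose proof (Rmin_r del ((d - c) / 2)).
    destruct (Hi x y ltac:(lra) ltac:(lra) ltac:(lra)) as [pr].
    rewrite (RInt_Reals F x y pr). apply H; lra.
Qed.

Lemma IMP_pick c d del1 del2 : c < d -> 0 < del1 -> 0 < del2 ->
  exists x y, c < x < c + del1 /\ c < x < c + del2 /\ d - del1 < y < d /\ d - del2 < y < d
    /\ x <= y.
Proof.
  intros Hcd H1 H2.
  set (del := Rmin (Rmin del1 del2) (d - c)).
  assert (Hp : 0 < del) by (apply Rmin_pos; [apply Rmin_pos|]; lra).
  pose proof (Rmin_l (Rmin del1 del2) (d - c)). pose proof (Rmin_r (Rmin del1 del2) (d - c)).
  pose proof (Rmin_l del1 del2). pose proof (Rmin_r del1 del2).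
  exists (c + del / 3), (d - del / 3). fold del in H, H0. repeat split; lra.
Qed.

Lemma IMP_unique F c d l1 l2 : c < d -> IMP F c d l1 -> IMP F c d l2 -> l1 = l2.
Proof.
  intros Hcd [_ H1] [_ H2].
  apply Rminus_diag_uniq. apply Rabs_eq_0.
  apply Rle_antisym; [|apply Rabs_pos].
  apply le_epsilon. intros eps He.
  destruct (H1 (eps/2) ltac:(lra)) as [d1 [Hd1 [_ K1]]].
  destruct (H2 (eps/2) ltac:(lra)) as [d2 [Hd2 [_ K2]]].
  destruct (IMP_pick c d d1 d2 Hcd Hd1 Hd2) as [x [y [? [? [? [? ?]]]]]].
  specialize (K1 x y ltac:(auto) ltac:(auto)). specialize (K2 x y ltac:(auto) ltac:(auto)).
  replace (l1 - l2) with (-(RInt F x y - l1) + (RInt F x y - l2)) by ring.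
  eapply Rle_trans. apply Rabs_triang. rewrite Rabs_Ropp. lra.
Qed.

Lemma IMP_impint F c d l : c < d -> IMP F c d l -> impint F c d = l.
Proof.
  intros Hcd H. unfold impint. apply choose_R_eq.
  - apply IMP_is; auto.
  - intros l' H'. apply (IMP_unique F c d); auto. apply is_IMP; auto.
Qed.

Lemma IMP_le F G c d l1 l2 : c < d -> IMP F c d l1 -> IMP G c d l2 ->
  (forall t, c < t < d -> F t <= G t) -> l1 <= l2.
Proof.
  intros Hcd [I1 H1] [I2 H2] Hle.
  apply le_epsilon. intros eps He.
  destruct (H1 (eps/2) ltac:(lra)) as [d1 [Hd1 [_ K1]]].
  destruct (H2 (eps/2) ltac:(lra)) as [d2 [Hd2 [_ K2]]].
  destruct (IMP_pick c d d1 d2 Hcd Hd1 Hd2) as [x [y [? [? [? [? ?]]]]]].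
  specialize (K1 x y ltac:(auto) ltac:(auto)). specialize (K2 x y ltac:(auto) ltac:(auto)).
  assert (RInt F x y <= RInt G x y).
  { apply RInt_le; auto. apply I1; lra. apply I2; lra. intros t Ht; apply Hle; lra. }
  apply Rabs_def2 in K1. apply Rabs_def2 in K2. lra.
Qed.

Lemma IMP_ext F G c d l : (forall t, c < t < d -> F t = G t) -> IMP F c d l -> IMP G c d l.
Proof.
  intros He [I1 H1]. split.
  - intros x y Hx Hxy Hy. apply (@ex_RInt_ext R_NormedModule F).
    + intros t Ht. rewrite Rmin_left in Ht by auto. rewrite Rmax_right in Ht by auto.
      apply He; lra.
    + apply I1; auto.
  - intros eps Heps. destruct (H1 eps Heps) as [del [Hd [Hd2 K]]].
    exists del. split; auto. split; auto. intros x y Hx Hy.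
    rewrite <- (@RInt_ext R_CompleteNormedModule F G). apply K; auto.
    intros t Ht. rewrite Rmin_left in Ht by lra. rewrite Rmax_right in Ht by lra.
    apply He; lra.
Qed.

Lemma ex_RInt_lin F G x y p q : ex_RInt F x y -> ex_RInt G x y -> ex_RInt (fun t => p * F t + q * G t) x y.
Proof.
  intros H1 H2.
  apply (@ex_RInt_plus R_NormedModule (fun t => scal p (F t)) (fun t => scal q (G t))).
  apply (@ex_RInt_scal R_NormedModule); auto. apply (@ex_RInt_scal R_NormedModule); auto.
Qed.
Lemma RInt_lin F G x y p q : ex_RInt F x y -> ex_RInt G x y -> RInt (fun t => p * F t + q * G t) x y = p * RInt F x y + q * RInt G x y.
Proof.
  intros H1 H2. apply is_RInt_unique.
  apply (@is_RInt_plus R_NormedModule (fun t => scal p (F t)) (fun t => scal q (G t)) x y (scal p (RInt F x y)) (scal q (RInt G x y))).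
  apply (@is_RInt_scal R_NormedModule). apply (@RInt_correct R_CompleteNormedModule); auto.
  apply (@is_RInt_scal R_NormedModule). apply (@RInt_correct R_CompleteNormedModule); auto.
Qed.

Lemma IMP_lin F G c d l1 l2 p q : IMP F c d l1 -> IMP G c d l2 ->
  IMP (fun t => p * F t + q * G t) c d (p * l1 + q * l2).
Proof.
  intros [I1 H1] [I2 H2]. split.
  - intros x y Hx Hxy Hy.
    apply ex_RInt_lin; [apply I1|apply I2]; auto.
  - intros eps He.
    set (e := eps / (2 * (Rabs p + Rabs q + 1))).
    assert (Hk : 0 < Rabs p + Rabs q + 1) by (pose proof (Rabs_pos p); pose proof (Rabs_pos q); lra).
    assert (He' : 0 < e) by (unfold e; apply Rdiv_lt_0_compat; lra).
    destruct (H1 e He') as [d1 [Hd1 [Hd1' K1]]].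
    destruct (H2 e He') as [d2 [Hd2 [Hd2' K2]]].
    exists (Rmin d1 d2). split; [apply Rmin_pos; auto|].
    pose proof (Rmin_l d1 d2). pose proof (Rmin_r d1 d2).
    split; [lra|]. intros x y Hx Hy.
    assert (Hxy : x <= y) by lra.
    assert (E1 : ex_RInt F x y) by (apply I1; lra).
    assert (E2 : ex_RInt G x y) by (apply I2; lra).
    assert (Heq : RInt (fun t => p * F t + q * G t) x y = p * RInt F x y + q * RInt G x y).
    { apply RInt_lin; auto. }
    rewrite Heq.
    specialize (K1 x y ltac:(lra) ltac:(lra)). specialize (K2 x y ltac:(lra) ltac:(lra)).
    replace (p * RInt F x y + q * RInt G x y - (p * l1 + q * l2))
      with (p * (RInt F x y - l1) + q * (RInt G x y - l2)) by ring.
    eapply Rle_lt_trans. apply Rabs_triang. rewrite !Rabs_mult.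
    assert (Rabs p * Rabs (RInt F x y - l1) <= Rabs p * e) by (apply Rmult_le_compat_l; [apply Rabs_pos|lra]).
    assert (Rabs q * Rabs (RInt G x y - l2) <= Rabs q * e) by (apply Rmult_le_compat_l; [apply Rabs_pos|lra]).
    assert (Rabs p * e + Rabs q * e + e = eps / 2) by (unfold e; field; lra).
    lra.
Qed.

Lemma RInt_mono_int H c d x y x' y' : (forall x y, c < x -> x <= y -> y < d -> ex_RInt H x y) ->
  (forall t, c < t < d -> 0 <= H t) -> c < x' -> x' <= x -> x <= y -> y <= y' -> y' < d ->
  RInt H x y <= RInt H x' y'.
Proof.
  intros I Hp H1 H2 H3 H4 H5.
  rewrite <- (@RInt_Chasles R_CompleteNormedModule H x' x y') by (apply I; lra).
  rewrite <- (@RInt_Chasles R_CompleteNormedModule H x y y') by (apply I; lra).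
  assert (0 <= RInt H x' x) by (apply RInt_ge_0; [lra|apply I; lra|intros; apply Hp; lra]).
  assert (0 <= RInt H y y') by (apply RInt_ge_0; [lra|apply I; lra|intros; apply Hp; lra]).
  unfold plus; simpl. lra.
Qed.

Lemma IMP_bound H c d l : IMP H c d l -> (forall t, c < t < d -> 0 <= H t) ->
  forall x y, c < x -> x <= y -> y < d -> RInt H x y <= l.
Proof.
  intros [I K] Hp x y Hx Hxy Hy. apply le_epsilon. intros eps He.
  destruct (K eps He) as [del [Hd [Hd2 K1]]].
  set (x' := c + Rmin del (x - c) / 2). set (y' := d - Rmin del (d - y) / 2).
  pose proof (Rmin_l del (x - c)). pose proof (Rmin_r del (x - c)).
  pose proof (Rmin_l del (d - y)). pose proof (Rmin_r del (d - y)).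
  assert (0 < Rmin del (x - c)) by (apply Rmin_pos; lra).
  assert (0 < Rmin del (d - y)) by (apply Rmin_pos; lra).
  specialize (K1 x' y' ltac:(unfold x'; lra) ltac:(unfold y'; lra)).
  apply Rabs_def2 in K1.
  assert (RInt H x y <= RInt H x' y') by (apply (RInt_mono_int H c d); auto; unfold x', y'; lra).
  lra.
Qed.

Lemma IMP_mono H c d B : c < d ->
  (forall x y, c < x -> x <= y -> y < d -> ex_RInt H x y) ->
  (forall t, c < t < d -> 0 <= H t) ->
  (forall x y, c < x -> x <= y -> y < d -> RInt H x y <= B) ->
  exists l, IMP H c d l.
Proof.
  intros Hcd I Hp HB.
  set (E := fun v => exists x y, c < x /\ x <= y /\ y < d /\ v = RInt H x y).
  assert (Hb : bound E).
  { exists B. intros v [x [y [? [? [? ->]]]]]. apply HB; auto. }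
  assert (Hne : exists v, E v).
  { exists (RInt H ((c+c+d)/3) ((c+c+d)/3)). exists ((c+c+d)/3), ((c+c+d)/3). repeat split; lra. }
  destruct (completeness E Hb Hne) as [l [Hub Hlub]].
  exists l. split; auto.
  intros eps He.
  assert (Hex : exists x0 y0, c < x0 /\ x0 <= y0 /\ y0 < d /\ l - eps < RInt H x0 y0).
  { apply Classical_Prop.NNPP. intros Hn.
    assert (l <= l - eps); [|lra].
    apply Hlub. intros v [x [y [? [? [? ->]]]]].
    apply Rnot_lt_le. intros Hlt. apply Hn. exists x, y. auto. }
  destruct Hex as [x0 [y0 [Hx0 [Hxy0 [Hy0 Hv]]]]].
  exists (Rmin (Rmin (x0 - c) (d - y0)) ((d - c) / 2)).
  pose proof (Rmin_l (Rmin (x0 - c) (d - y0)) ((d - c) / 2)).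
  pose proof (Rmin_r (Rmin (x0 - c) (d - y0)) ((d - c) / 2)).
  pose proof (Rmin_l (x0 - c) (d - y0)). pose proof (Rmin_r (x0 - c) (d - y0)).
  split; [apply Rmin_pos; [apply Rmin_pos|]; lra|]. split; [lra|].
  intros x y Hx Hy.
  assert (RInt H x0 y0 <= RInt H x y) by (apply (RInt_mono_int H c d); auto; lra).
  assert (RInt H x y <= l) by (apply Hub; exists x, y; repeat split; lra).
  apply Rabs_def1; lra.
Qed.

Lemma IMP_dom F G c d lG : c < d ->
  (forall x y, c < x -> x <= y -> y < d -> ex_RInt F x y) ->
  (forall t, c < t < d -> Rabs (F t) <= G t) -> IMP G c d lG ->
  exists l, IMP F c d l.
Proof.
  intros Hcd IF Hd HG.
  pose proof HG as [IG KG].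
  set (H := fun t => 1 * F t + 1 * G t).
  assert (IH : forall x y, c < x -> x <= y -> y < d -> ex_RInt H x y).
  { intros x y ? ? ?. unfold H.
    apply ex_RInt_lin; [apply IF|apply IG]; auto. }
  assert (Hp : forall t, c < t < d -> 0 <= H t).
  { intros t Ht. specialize (Hd t Ht). unfold H. apply Rabs_def2b in Hd. lra. }
  assert (HGp : forall t, c < t < d -> 0 <= G t).
  { intros t Ht. specialize (Hd t Ht). pose proof (Rabs_pos (F t)). lra. }
  destruct (IMP_mono H c d (2 * lG) Hcd IH Hp) as [lH HlH].
  { intros x y Hx Hxy Hy.
    apply Rle_trans with (RInt (fun t => 2 * G t + 0 * G t) x y).
    - apply RInt_le; auto. apply ex_RInt_lin; apply IG; auto.
      intros t Ht. specialize (Hd t ltac:(lra)). apply Rabs_def2b in Hd.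
      unfold H. lra.
    - rewrite RInt_lin by (apply IG; auto).
      pose proof (IMP_bound G c d lG HG HGp x y Hx Hxy Hy). lra. }
  exists (1 * lH + (-1) * lG).
  apply IMP_ext with (fun t => 1 * H t + (-1) * G t).
  - intros t _. unfold H. ring.
  - apply IMP_lin; auto.
Qed.

Lemma IMP_FTC F P c d Pc Pd : c < d ->
  (forall x, c < x < d -> is_derive P x (F x)) ->
  (forall x, c < x < d -> continuous F x) ->
  (forall eps, 0 < eps -> exists del, 0 < del /\ forall x, c < x < c + del -> Rabs (P x - Pc) < eps) ->
  (forall eps, 0 < eps -> exists del, 0 < del /\ forall x, d - del < x < d -> Rabs (P x - Pd) < eps) ->
  IMP F c d (Pd - Pc).
Proof.
  intros Hcd HD HC Lc Ld.
  assert (I : forall x y, c < x -> x <= y -> y < d -> ex_RInt F x y).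
  { intros x y Hx Hxy Hy. apply (@ex_RInt_continuous R_CompleteNormedModule). intros z Hz.
    rewrite Rmin_left in Hz by auto. rewrite Rmax_right in Hz by auto. apply HC; lra. }
  split; auto.
  intros eps He.
  destruct (Lc (eps/2) ltac:(lra)) as [d1 [Hd1 K1]].
  destruct (Ld (eps/2) ltac:(lra)) as [d2 [Hd2 K2]].
  exists (Rmin (Rmin d1 d2) ((d - c) / 2)).
  pose proof (Rmin_l (Rmin d1 d2) ((d - c) / 2)).
  pose proof (Rmin_r (Rmin d1 d2) ((d - c) / 2)).
  pose proof (Rmin_l d1 d2). pose proof (Rmin_r d1 d2).
  split; [apply Rmin_pos; [apply Rmin_pos|]; lra|]. split; [lra|].
  intros x y Hx Hy.
  assert (Heq : RInt F x y = P y - P x).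
  { apply is_RInt_unique.
    apply (@is_RInt_derive R_CompleteNormedModule P F x y).
    - intros z Hz. rewrite Rmin_left in Hz by lra. rewrite Rmax_right in Hz by lra. apply HD; lra.
    - intros z Hz. rewrite Rmin_left in Hz by lra. rewrite Rmax_right in Hz by lra. apply HC; lra. }
  rewrite Heq.
  specialize (K1 x ltac:(lra)). specialize (K2 y ltac:(lra)).
  replace (P y - P x - (Pd - Pc)) with ((P y - Pd) - (P x - Pc)) by ring.
  eapply Rle_lt_trans. apply Rabs_triang. rewrite Rabs_Ropp. lra.
Qed.

Lemma dl_add f g x lf lg : derivable_pt_lim f x lf -> derivable_pt_lim g x lg ->
  derivable_pt_lim (fun t => f t + g t) x (lf + lg).
Proof. intros H1 H2. exact (derivable_pt_lim_plus f g x lf lg H1 H2). Qed.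
Lemma dl_sc f x lf p : derivable_pt_lim f x lf -> derivable_pt_lim (fun t => p * f t) x (p * lf).
Proof. intros H1. exact (derivable_pt_lim_scal f p x lf H1). Qed.
Lemma dl_eq f x l l' : derivable_pt_lim f x l -> l = l' -> derivable_pt_lim f x l'.
Proof. intros H ->. exact H. Qed.
Lemma dl_comp f g x lf lg : derivable_pt_lim f x lf -> derivable_pt_lim g (f x) lg ->
  derivable_pt_lim (fun t => g (f t)) x (lg * lf).
Proof. intros H1 H2. exact (derivable_pt_lim_comp f g x lf lg H1 H2). Qed.
Lemma dl_cst c x : derivable_pt_lim (fun _ => c) x 0.
Proof. exact (derivable_pt_lim_const c x). Qed.
Lemma dl_sub_cst f x l c : derivable_pt_lim f x l -> derivable_pt_lim (fun t => f t - c) x l.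
Proof. intros H. apply dl_eq with (l - 0). exact (derivable_pt_lim_minus f (fun _ => c) x l 0 H (dl_cst c x)). ring. Qed.
Lemma dl_cst_sub f x l c : derivable_pt_lim f x l -> derivable_pt_lim (fun t => c - f t) x (- l).
Proof. intros H. apply dl_eq with (0 - l). exact (derivable_pt_lim_minus (fun _ => c) f x 0 l (dl_cst c x) H). ring. Qed.

Lemma cp_mul f g x : continuity_pt f x -> continuity_pt g x -> continuity_pt (fun t => f t * g t) x.
Proof. intros H1 H2. exact (continuity_pt_mult f g x H1 H2). Qed.
Lemma cp_add f g x : continuity_pt f x -> continuity_pt g x -> continuity_pt (fun t => f t + g t) x.
Proof. intros H1 H2. exact (continuity_pt_plus f g x H1 H2). Qed.
Lemma cp_cst c x : continuity_pt (fun _ => c) x.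
Proof. apply continuity_pt_const. intros ? ?; reflexivity. Qed.
Lemma cp_comp f g x : continuity_pt f x -> continuity_pt g (f x) -> continuity_pt (fun t => g (f t)) x.
Proof. intros H1 H2. exact (continuity_pt_comp f g x H1 H2). Qed.
Lemma cp_dl f x l : derivable_pt_lim f x l -> continuity_pt f x.
Proof. intros H. apply derivable_continuous_pt. exists l. exact H. Qed.

Lemma rpow_pos x y : 0 < Rpower x y.
Proof. unfold Rpower. apply exp_pos. Qed.

Lemma rpow_S x y : 0 < x -> Rpower x (y + 1) = Rpower x y * x.
Proof. intros Hx. rewrite Rpower_plus, Rpower_1; auto. Qed.

Lemma rpow_small al eps : 0 < al -> 0 < eps ->
  exists del, 0 < del /\ forall x, 0 < x < del -> Rpower x al < eps.
Proof.
  intros Ha He. exists (Rpower eps (/ al)). split; [apply rpow_pos|].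
  intros x Hx. replace eps with (Rpower (Rpower eps (/ al)) al).
  - apply Rlt_Rpower_l; auto.
  - rewrite Rpower_mult. replace (/ al * al) with 1 by (field; lra). apply Rpower_1; auto.
Qed.

Lemma dl_rpow x y : 0 < x -> derivable_pt_lim (fun t => Rpower t y) x (y * Rpower x (y - 1)).
Proof. apply derivable_pt_lim_power. Qed.

Definition Psi (c0 c1 c2 al x : R) : R :=
  c0 / al * Rpower x al + (c1 / (al + 1) * Rpower x (al + 1) + c2 / (al + 2) * Rpower x (al + 2)).

Lemma Psi_deriv c0 c1 c2 al x : 0 < al -> 0 < x ->
  derivable_pt_lim (Psi c0 c1 c2 al) x (Rpower x (al - 1) * (c0 + c1 * x + c2 * x * x)).
Proof.
  intros Ha Hx. unfold Psi.
  apply dl_eq with (c0 / al * (al * Rpower x (al - 1)) +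
     (c1 / (al + 1) * ((al + 1) * Rpower x (al + 1 - 1)) + c2 / (al + 2) * ((al + 2) * Rpower x (al + 2 - 1)))).
  - apply (dl_add (fun t => c0 / al * Rpower t al) (fun t => c1 / (al + 1) * Rpower t (al + 1) + c2 / (al + 2) * Rpower t (al + 2))).
    + apply dl_sc. apply dl_rpow; auto.
    + apply (dl_add (fun t => c1 / (al + 1) * Rpower t (al + 1)) (fun t => c2 / (al + 2) * Rpower t (al + 2))).
      * apply dl_sc. apply dl_rpow; auto.
      * apply dl_sc. apply dl_rpow; auto.
  - replace (al + 1 - 1) with ((al - 1) + 1) by ring.
    replace (al + 2 - 1) with (((al - 1) + 1) + 1) by ring.
    rewrite !rpow_S by auto. field. lra.
Qed.

Lemma Psi_small c0 c1 c2 al eps : 0 < al -> 0 < eps ->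
  exists del, 0 < del /\ forall x, 0 < x < del -> Rabs (Psi c0 c1 c2 al x) < eps.
Proof.
  intros Ha He.
  set (C := Rabs (c0 / al) + Rabs (c1 / (al + 1)) + Rabs (c2 / (al + 2)) + 1).
  assert (HC : 0 < C).
  { unfold C. pose proof (Rabs_pos (c0 / al)). pose proof (Rabs_pos (c1 / (al + 1))).
    pose proof (Rabs_pos (c2 / (al + 2))). lra. }
  destruct (rpow_small al (eps / C) Ha ltac:(apply Rdiv_lt_0_compat; lra)) as [d [Hd K]].
  exists (Rmin d 1). split; [apply Rmin_pos; lra|]. intros x Hx.
  pose proof (Rmin_l d 1). pose proof (Rmin_r d 1).
  specialize (K x ltac:(lra)).
  pose proof (rpow_pos x al) as Hr.
  assert (E1 : Rpower x (al + 1) = Rpower x al * x) by (apply rpow_S; lra).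
  assert (E2 : Rpower x (al + 2) = Rpower x al * x * x).
  { replace (al + 2) with ((al + 1) + 1) by ring. rewrite !rpow_S by lra. ring. }
  unfold Psi. rewrite E1, E2.
  eapply Rle_lt_trans. apply Rabs_triang.
  eapply Rle_lt_trans. apply Rplus_le_compat_l. apply Rabs_triang.
  rewrite !Rabs_mult. rewrite !(Rabs_right (Rpower x al)) by lra.
  rewrite !(Rabs_right x) by lra.
  assert (Rabs (c1 / (al + 1)) * (Rpower x al * x) <= Rabs (c1 / (al + 1)) * Rpower x al).
  { apply Rmult_le_compat_l; [apply Rabs_pos|]. nra. }
  assert (Rabs (c2 / (al + 2)) * (Rpower x al * x * x) <= Rabs (c2 / (al + 2)) * Rpower x al).
  { apply Rmult_le_compat_l; [apply Rabs_pos|]. assert (0 <= x * x <= 1) by nra. nra. }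
  assert (C * Rpower x al < eps).
  { apply Rlt_le_trans with (C * (eps / C)). apply Rmult_lt_compat_l; lra. right; field; lra. }
  unfold C in *. nra.
Qed.

Definition Ig (phi phid : R -> R) (sg S c0 c1 c2 al : R) : R -> R :=
  fun t => sg * S * (Rpower (phi t) (al - 1) * (c0 + c1 * phi t + c2 * phi t * phi t) * phid t).

Lemma P_deriv (phi : R -> R) pd t sg S c0 c1 c2 al : 0 < al -> 0 < phi t ->
  derivable_pt_lim phi t pd ->
  derivable_pt_lim (fun t => sg * S * Psi c0 c1 c2 al (phi t)) t
    (sg * S * (Rpower (phi t) (al - 1) * (c0 + c1 * phi t + c2 * phi t * phi t) * pd)).
Proof.
  intros Ha Hp Hd. apply dl_sc.
  apply (dl_comp phi (Psi c0 c1 c2 al)); auto. apply Psi_deriv; auto.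
Qed.

Lemma Ig_cont (phi phid : R -> R) sg S c0 c1 c2 al t pd : 0 < phi t ->
  derivable_pt_lim phi t pd -> continuity_pt phid t ->
  continuity_pt (Ig phi phid sg S c0 c1 c2 al) t.
Proof.
  intros Hp Hd Hc. unfold Ig.
  assert (Cphi : continuity_pt phi t) by (eapply cp_dl; eauto).
  apply (cp_mul (fun _ => sg * S)). apply cp_cst.
  apply (cp_mul (fun t => Rpower (phi t) (al - 1) * (c0 + c1 * phi t + c2 * phi t * phi t)) phid); auto.
  apply (cp_mul (fun t => Rpower (phi t) (al - 1))).
  - apply (cp_comp phi (fun x => Rpower x (al - 1))); auto. eapply cp_dl. apply dl_rpow; auto.
  - apply (cp_add (fun t => c0 + c1 * phi t)).
    + apply (cp_add (fun _ => c0)). apply cp_cst. apply (cp_mul (fun _ => c1)); auto. apply cp_cst.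
    + apply (cp_mul (fun t => c2 * phi t)); auto. apply (cp_mul (fun _ => c2)); auto. apply cp_cst.
Qed.

Lemma IMP_psi (phi phid : R -> R) c d sg S c0 c1 c2 al Pc Pd : 0 < al -> c < d ->
  (forall t, c < t < d -> derivable_pt_lim phi t (phid t)) ->
  (forall t, c < t < d -> continuity_pt phid t) ->
  (forall t, c < t < d -> 0 < phi t) ->
  (forall eps, 0 < eps -> exists del, 0 < del /\ forall x, c < x < c + del ->
      Rabs (sg * S * Psi c0 c1 c2 al (phi x) - Pc) < eps) ->
  (forall eps, 0 < eps -> exists del, 0 < del /\ forall x, d - del < x < d ->
      Rabs (sg * S * Psi c0 c1 c2 al (phi x) - Pd) < eps) ->
  IMP (Ig phi phid sg S c0 c1 c2 al) c d (Pd - Pc).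
Proof.
  intros Ha Hcd Hd Hc Hp Lc Ld.
  apply (IMP_FTC _ (fun t => sg * S * Psi c0 c1 c2 al (phi t))); auto.
  - intros x Hx. apply is_derive_Reals. apply P_deriv; auto.
  - intros x Hx. apply continuity_pt_filterlim. apply Ig_cont with (phid x); auto.
Qed.

Lemma lim_psi0 (Nb : R -> R -> Prop) (phi : R -> R) sg S c0 c1 c2 al : 0 < al ->
  (forall eps, 0 < eps -> exists del, 0 < del /\ forall t, Nb del t -> 0 < phi t < eps) ->
  forall eps, 0 < eps -> exists del, 0 < del /\ forall t, Nb del t ->
    Rabs (sg * S * Psi c0 c1 c2 al (phi t) - 0) < eps.
Proof.
  intros Ha Hn eps He.
  set (k := Rabs (sg * S) + 1).
  assert (Hk : 0 < k) by (unfold k; pose proof (Rabs_pos (sg * S)); lra).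
  destruct (Psi_small c0 c1 c2 al (eps / k) Ha ltac:(apply Rdiv_lt_0_compat; lra)) as [d1 [Hd1 K1]].
  destruct (Hn d1 Hd1) as [d2 [Hd2 K2]].
  exists d2. split; auto. intros t Ht.
  specialize (K1 (phi t) (K2 t Ht)).
  rewrite Rminus_0_r, Rabs_mult.
  assert (Rabs (sg * S) * Rabs (Psi c0 c1 c2 al (phi t)) <= Rabs (sg * S) * (eps / k)).
  { apply Rmult_le_compat_l; [apply Rabs_pos|lra]. }
  assert (Rabs (sg * S) * (eps / k) < eps).
  { apply Rlt_le_trans with (k * (eps / k)). apply Rmult_lt_compat_r. apply Rdiv_lt_0_compat; lra.
    unfold k; lra. right; field; lra. }
  lra.
Qed.

Lemma lim_reg (P : R -> R) x0 : continuity_pt P x0 ->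
  forall eps, 0 < eps -> exists del, 0 < del /\ forall t, Rabs (t - x0) < del ->
    Rabs (P t - P x0) < eps.
Proof. intros H. apply cont_eps. exact H. Qed.

Definition Lam (ha hb A B s : R) : R :=
  (A * (hb * s - s * s / 2) + B * (s * s / 2 - ha * s)) / (hb - ha).

Lemma Lam_deriv ha hb A B s : ha < hb ->
  derivable_pt_lim (Lam ha hb A B) s ((A * (hb - s) + B * (s - ha)) / (hb - ha)).
Proof.
  intros H. apply is_derive_Reals. unfold Lam. auto_derive; auto. field. lra.
Qed.

Lemma mvt_bound (f fd : R -> R) ha hb cc dd : ha < hb -> cc < ha -> hb < dd ->
  (forall y, cc < y < dd -> derivable_pt_lim f y (fd y)) ->
  convex_on (fun y => Rabs (fd y)) ha hb ->
  forall u v, ha <= u -> u <= v -> v <= hb ->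
  Rabs (f v - f u) <= Lam ha hb (Rabs (fd ha)) (Rabs (fd hb)) v - Lam ha hb (Rabs (fd ha)) (Rabs (fd hb)) u.
Proof.
  intros Hab Hc Hd Hf Hcv u v Hu Huv Hv.
  set (A := Rabs (fd ha)). set (B := Rabs (fd hb)).
  set (L := fun s => (A * (hb - s) + B * (s - ha)) / (hb - ha)).
  assert (HL : forall s, ha <= s <= hb -> Rabs (fd s) <= L s).
  { intros s Hs. set (lam := (hb - s) / (hb - ha)).
    assert (Hl : 0 <= lam <= 1).
    { assert (E : lam * (hb - ha) = hb - s) by (unfold lam; field; lra). clearbody lam. nra. }
    pose proof (Hcv ha hb lam ltac:(lra) ltac:(lra) Hl) as K. simpl in K.
    replace (lam * ha + (1 - lam) * hb) with s in K by (unfold lam; field; lra).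
    unfold L. replace ((A * (hb - s) + B * (s - ha)) / (hb - ha)) with (lam * A + (1 - lam) * B)
      by (unfold lam; field; lra). exact K. }
  destruct (Req_dec u v) as [<-|Hne].
  { rewrite !Rminus_diag, Rabs_R0. lra. }
  assert (Huv' : u < v) by lra.
  destruct (MVT_cor2 (fun s => f s - Lam ha hb A B s) (fun s => fd s - L s) u v Huv') as [c1 [E1 Hc1]].
  { intros s Hs. apply (derivable_pt_lim_minus f (Lam ha hb A B)).
    apply Hf; lra. apply Lam_deriv; lra. }
  destruct (MVT_cor2 (fun s => f s + Lam ha hb A B s) (fun s => fd s + L s) u v Huv') as [c2 [E2 Hc2]].
  { intros s Hs. apply (derivable_pt_lim_plus f (Lam ha hb A B)).
    apply Hf; lra. apply Lam_deriv; lra. }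
  pose proof (HL c1 ltac:(lra)) as K1. pose proof (HL c2 ltac:(lra)) as K2.
  apply Rabs_def2b in K1. apply Rabs_def2b in K2.
  assert ((fd c1 - L c1) * (v - u) <= 0) by (apply Rmult_le_0_r; lra).
  assert (0 <= (fd c2 + L c2) * (v - u)) by (apply Rmult_le_pos; lra).
  apply Rabs_le. lra.
Qed.

Lemma int_cont F c d : (forall t, c < t < d -> continuity_pt F t) ->
  forall x y, c < x -> x <= y -> y < d -> ex_RInt F x y.
Proof.
  intros H x y Hx Hxy Hy. apply (@ex_RInt_continuous R_CompleteNormedModule).
  intros z Hz. rewrite Rmin_left in Hz by auto. rewrite Rmax_right in Hz by auto.
  apply continuity_pt_filterlim. apply H; lra.
Qed.

Lemma hd_nonneg (h hd : R -> R) a b t : a < t < b ->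
  (forall x y, a <= x <= b -> a <= y <= b -> x < y -> h x < h y) ->
  derivable_pt_lim h t (hd t) -> 0 <= hd t.
Proof.
  intros Ht Hm Hd. apply Rnot_lt_le. intros Hneg.
  destruct (Hd (- hd t) ltac:(lra)) as [del K].
  assert (Hp : 0 < Rmin del (b - t)) by (apply Rmin_pos; [apply cond_pos|lra]).
  pose proof (Rmin_l del (b - t)). pose proof (Rmin_r del (b - t)).
  set (e := Rmin del (b - t) / 2).
  assert (He : e = Rmin del (b - t) / 2) by reflexivity. clearbody e.
  assert (Hne : e <> 0) by (apply Rgt_not_eq; lra).
  assert (Hlt : Rabs e < del) by (rewrite Rabs_right by lra; lra).
  specialize (K e Hne Hlt).
  assert (h t < h (t + e)) by (apply Hm; lra).
  assert (0 < (h (t + e) - h t) / e) by (apply Rdiv_lt_0_compat; lra).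
  apply Rabs_def2 in K. lra.
Qed.

Lemma left_part a b al (h hd f fd g : R -> R) cc dd S :
  a < b -> 0 < al ->
  (forall x y, a <= x <= b -> a <= y <= b -> x < y -> h x < h y) ->
  (forall t, a <= t <= b -> deriv_within h a b t (hd t)) ->
  cont_on hd a b ->
  cc < h a -> h b < dd -> (forall y, cc < y < dd -> derivable_pt_lim f y (fd y)) ->
  convex_on (fun y => Rabs (fd y)) (h a) (h b) ->
  cont_on g a b ->
  (forall t, a <= t <= (a + b) / 2 -> Rabs (g t) <= S) ->
  Rabs (f (h ((a + b) / 2)) * impint (fun t => Rpower (h t - h a) (al - 1) * hd t * g t) a ((a + b) / 2)
        - impint (fun t => Rpower (h t - h a) (al - 1) * hd t * (g t * f (h t))) a ((a + b) / 2))
  <= S * Psi (Lam (h a) (h b) (Rabs (fd (h a))) (Rabs (fd (h b))) (h ((a + b) / 2))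
              - Lam (h a) (h b) (Rabs (fd (h a))) (Rabs (fd (h b))) (h a))
             (- Rabs (fd (h a))) ((Rabs (fd (h a)) - Rabs (fd (h b))) / (2 * (h b - h a)))
             al (h ((a + b) / 2) - h a).
Proof.
  intros Hab Hal Hmon Hdw Hhdc Hcc Hdd Hf Hcv Hgc HS.
  set (m := (a + b) / 2) in *.
  assert (Hm : a < m < b) by (unfold m; lra).
  set (A := Rabs (fd (h a))). set (B := Rabs (fd (h b))).
  set (Lm := Lam (h a) (h b) A B).
  assert (Hhab : h a < h b) by (apply Hmon; lra).
  assert (Hder : forall t, a < t < b -> derivable_pt_lim h t (hd t)).
  { intros t Ht. apply (deriv_within_int h a b); auto. apply Hdw; lra. }
  assert (Hrng : forall t, a <= t <= b -> h a <= h t <= h b).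
  { intros t Ht. split.
    - destruct (Req_dec t a) as [->|]; [lra|]. left; apply Hmon; lra.
    - destruct (Req_dec t b) as [->|]; [lra|]. left; apply Hmon; lra. }
  assert (Hpos : forall t, a < t <= b -> 0 < h t - h a).
  { intros t Ht. assert (h a < h t) by (apply Hmon; lra). lra. }
  set (phi := fun t => h t - h a).
  assert (Hphid : forall t, a < t < b -> derivable_pt_lim phi t (hd t)).
  { intros t Ht. apply dl_sub_cst. apply Hder; auto. }
  assert (Hhdc' : forall t, a < t < b -> continuity_pt hd t).
  { intros t Ht. apply (cont_on_int hd a b); auto. }
  assert (Hgc' : forall t, a < t < b -> continuity_pt g t).
  { intros t Ht. apply (cont_on_int g a b); auto. }
  assert (Hhc : forall t, a < t < b -> continuity_pt h t).
  { intros t Ht. eapply cp_dl. apply Hder; auto. }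
  assert (Hhd0 : forall t, a < t < b -> 0 <= hd t).
  { intros t Ht. apply (hd_nonneg h hd a b); auto. }
  assert (IG : forall c0 c1 c2, IMP (Ig phi hd 1 S c0 c1 c2 al) a m (1 * S * Psi c0 c1 c2 al (phi m) - 0)).
  { intros c0 c1 c2. apply IMP_psi; auto; try lra.
    - intros t Ht. apply Hphid; lra.
    - intros t Ht. apply Hhdc'; lra.
    - intros t Ht. apply Hpos; lra.
    - apply (lim_psi0 (fun del t => a < t < a + del)); auto.
      intros eps He.
      destruct (deriv_within_cont h a b a (hd a) (Hdw a ltac:(lra)) eps He) as [del [Hd K]].
      exists (Rmin del (m - a)). split; [apply Rmin_pos; lra|].
      intros t Ht. pose proof (Rmin_l del (m - a)). pose proof (Rmin_r del (m - a)).
      split. apply Hpos; lra.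
      specialize (K t ltac:(lra) ltac:(rewrite Rabs_right; lra)).
      apply Rabs_def2 in K. unfold phi; lra.
    - intros eps He.
      assert (Hc : continuity_pt (fun t => 1 * S * Psi c0 c1 c2 al (phi t)) m).
      { eapply cp_dl. apply P_deriv; [exact Hal | apply Hpos; lra | apply Hphid; auto]. }
      destruct (lim_reg _ m Hc eps He) as [del [Hd K]].
      exists del. split; auto. intros t Ht. apply K. rewrite Rabs_left; lra. }
  set (F1 := fun t => Rpower (h t - h a) (al - 1) * hd t * g t).
  set (F3 := fun t => Rpower (h t - h a) (al - 1) * hd t * (g t * f (h t))).
  assert (HK : forall t, a < t < m -> 0 <= Rpower (h t - h a) (al - 1) * hd t).
  { intros t Ht. apply Rmult_le_pos. left; apply rpow_pos. apply Hhd0; lra. }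
  assert (CR : forall t, a < t < m -> continuity_pt (fun t => Rpower (h t - h a) (al - 1) * hd t) t).
  { intros t Ht. apply (cp_mul (fun t => Rpower (h t - h a) (al - 1)) hd).
    - apply (cp_comp phi (fun x => Rpower x (al - 1))).
      eapply cp_dl. apply Hphid; lra. eapply cp_dl. apply dl_rpow. apply Hpos; lra.
    - apply Hhdc'; lra. }
  assert (CF1 : forall t, a < t < m -> continuity_pt F1 t).
  { intros t Ht. apply (cp_mul (fun t => Rpower (h t - h a) (al - 1) * hd t) g); auto.
    apply Hgc'; lra. }
  assert (CF3 : forall t, a < t < m -> continuity_pt F3 t).
  { intros t Ht. apply (cp_mul (fun t => Rpower (h t - h a) (al - 1) * hd t) (fun t => g t * f (h t))); auto.
    apply (cp_mul g (fun t => f (h t))). apply Hgc'; lra.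
    apply (cp_comp h f). apply Hhc; lra. eapply cp_dl. apply Hf.
    pose proof (Hrng t ltac:(lra)). lra. }
  destruct (IMP_dom F1 (Ig phi hd 1 S 1 0 0 al) a m (1 * S * Psi 1 0 0 al (phi m) - 0) ltac:(lra) (int_cont F1 a m CF1)) as [l1 IF1].
  { intros t Ht. unfold F1, Ig, phi. specialize (HK t Ht). specialize (HS t ltac:(lra)).
    rewrite Rabs_mult, (Rabs_right (Rpower _ _ * hd t)) by lra.
    replace (1 * S * (Rpower (h t - h a) (al - 1) * (1 + 0 * (h t - h a) + 0 * (h t - h a) * (h t - h a)) * hd t))
      with (Rpower (h t - h a) (al - 1) * hd t * S) by ring.
    apply Rmult_le_compat_l; auto. }
  { apply IG. }
  set (c0 := Lm (h m) - Lm (h a)). set (c1 := - A). set (c2 := (A - B) / (2 * (h b - h a))).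
  set (E := fun t => f (h m) * F1 t + (-1) * F3 t).
  assert (CE : forall t, a < t < m -> continuity_pt E t).
  { intros t Ht. apply (cp_add (fun t => f (h m) * F1 t) (fun t => (-1) * F3 t)).
    apply (cp_mul (fun _ => f (h m))). apply cp_cst. auto.
    apply (cp_mul (fun _ => -1)). apply cp_cst. auto. }
  assert (HEb : forall t, a < t < m -> Rabs (E t) <= Ig phi hd 1 S c0 c1 c2 al t).
  { intros t Ht. unfold E, F1, F3, Ig, phi.
    specialize (HK t Ht). specialize (HS t ltac:(lra)).
    pose proof (Hrng t ltac:(lra)). pose proof (Hrng m ltac:(lra)).
    assert (Hht : h t <= h m) by (left; apply Hmon; lra).
    pose proof (mvt_bound f fd (h a) (h b) cc dd Hhab Hcc Hdd Hf Hcv (h t) (h m) ltac:(lra) Hht ltac:(lra)) as Hmv.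
    fold A B Lm in Hmv.
    replace (f (h m) * (Rpower (h t - h a) (al - 1) * hd t * g t) +
             -1 * (Rpower (h t - h a) (al - 1) * hd t * (g t * f (h t))))
      with ((Rpower (h t - h a) (al - 1) * hd t) * (g t * (f (h m) - f (h t)))) by ring.
    replace (1 * S * (Rpower (h t - h a) (al - 1) * (c0 + c1 * (h t - h a) + c2 * (h t - h a) * (h t - h a)) * hd t))
      with ((Rpower (h t - h a) (al - 1) * hd t) * (S * (Lm (h m) - Lm (h t)))).
    2:{ unfold c0, c1, c2, Lm, Lam. field. lra. }
    rewrite Rabs_mult, (Rabs_right (Rpower _ _ * hd t)) by lra.
    apply Rmult_le_compat_l; auto. rewrite Rabs_mult.
    apply Rmult_le_compat; auto using Rabs_pos. }
  destruct (IMP_dom E (Ig phi hd 1 S c0 c1 c2 al) a m (1 * S * Psi c0 c1 c2 al (phi m) - 0) ltac:(lra) (int_cont E a m CE) HEb (IG c0 c1 c2))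
    as [lE IE].
  assert (IF3 : IMP F3 a m (f (h m) * l1 + (-1) * lE)).
  { apply IMP_ext with (fun t => f (h m) * F1 t + (-1) * E t).
    - intros t _. unfold E. ring.
    - apply IMP_lin; auto. }
  rewrite (IMP_impint F1 a m l1 ltac:(lra) IF1).
  rewrite (IMP_impint F3 a m _ ltac:(lra) IF3).
  replace (f (h m) * l1 - (f (h m) * l1 + -1 * lE)) with lE by ring.
  assert (lE <= 1 * S * Psi c0 c1 c2 al (phi m) - 0).
  { apply (IMP_le E (Ig phi hd 1 S c0 c1 c2 al) a m); auto. lra.
    intros t Ht. specialize (HEb t Ht). apply Rabs_def2b in HEb. lra. }
  assert (- lE <= 1 * S * Psi c0 c1 c2 al (phi m) - 0).
  { replace (- lE) with ((-1) * lE + 0 * lE) by ring.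
    apply (IMP_le (fun t => (-1) * E t + 0 * E t) (Ig phi hd 1 S c0 c1 c2 al) a m); auto. lra.
    apply IMP_lin; auto.
    intros t Ht. specialize (HEb t Ht). apply Rabs_def2b in HEb. lra. }
  unfold phi in *. apply Rabs_le. lra.
Qed.
Lemma right_part a b al (h hd f fd g : R -> R) cc dd S :
  a < b -> 0 < al ->
  (forall x y, a <= x <= b -> a <= y <= b -> x < y -> h x < h y) ->
  (forall t, a <= t <= b -> deriv_within h a b t (hd t)) ->
  cont_on hd a b ->
  cc < h a -> h b < dd -> (forall y, cc < y < dd -> derivable_pt_lim f y (fd y)) ->
  convex_on (fun y => Rabs (fd y)) (h a) (h b) ->
  cont_on g a b ->
  (forall t, (a + b) / 2 <= t <= b -> Rabs (g t) <= S) ->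
  Rabs (f (h ((a + b) / 2)) * impint (fun t => Rpower (h b - h t) (al - 1) * hd t * g t) ((a + b) / 2) b
        - impint (fun t => Rpower (h b - h t) (al - 1) * hd t * (g t * f (h t))) ((a + b) / 2) b)
  <= S * Psi (Lam (h a) (h b) (Rabs (fd (h a))) (Rabs (fd (h b))) (h b)
              - Lam (h a) (h b) (Rabs (fd (h a))) (Rabs (fd (h b))) (h ((a + b) / 2)))
             (- Rabs (fd (h b))) ((Rabs (fd (h b)) - Rabs (fd (h a))) / (2 * (h b - h a)))
             al (h b - h ((a + b) / 2)).
Proof.
  intros Hab Hal Hmon Hdw Hhdc Hcc Hdd Hf Hcv Hgc HS.
  set (m := (a + b) / 2) in *.
  assert (Hm : a < m < b) by (unfold m; lra).
  set (A := Rabs (fd (h a))). set (B := Rabs (fd (h b))).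
  set (Lm := Lam (h a) (h b) A B).
  assert (Hhab : h a < h b) by (apply Hmon; lra).
  assert (Hder : forall t, a < t < b -> derivable_pt_lim h t (hd t)).
  { intros t Ht. apply (deriv_within_int h a b); auto. apply Hdw; lra. }
  assert (Hrng : forall t, a <= t <= b -> h a <= h t <= h b).
  { intros t Ht. split.
    - destruct (Req_dec t a) as [->|]; [lra|]. left; apply Hmon; lra.
    - destruct (Req_dec t b) as [->|]; [lra|]. left; apply Hmon; lra. }
  assert (Hpos : forall t, a <= t < b -> 0 < h b - h t).
  { intros t Ht. assert (h t < h b) by (apply Hmon; lra). lra. }
  set (phi := fun t => h b - h t).
  set (phid := fun t => - hd t).
  assert (Hphid : forall t, a < t < b -> derivable_pt_lim phi t (phid t)).
  { intros t Ht. apply dl_cst_sub. apply Hder; auto. }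
  assert (Hhdc' : forall t, a < t < b -> continuity_pt hd t).
  { intros t Ht. apply (cont_on_int hd a b); auto. }
  assert (Hphidc : forall t, a < t < b -> continuity_pt phid t).
  { intros t Ht. exact (continuity_pt_opp hd t (Hhdc' t Ht)). }
  assert (Hgc' : forall t, a < t < b -> continuity_pt g t).
  { intros t Ht. apply (cont_on_int g a b); auto. }
  assert (Hhc : forall t, a < t < b -> continuity_pt h t).
  { intros t Ht. eapply cp_dl. apply Hder; auto. }
  assert (Hhd0 : forall t, a < t < b -> 0 <= hd t).
  { intros t Ht. apply (hd_nonneg h hd a b); auto. }
  assert (IG : forall c0 c1 c2, IMP (Ig phi phid (-1) S c0 c1 c2 al) m b (0 - (-1) * S * Psi c0 c1 c2 al (phi m))).
  { intros c0 c1 c2. apply IMP_psi; auto; try lra.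
    - intros t Ht. apply Hphid; lra.
    - intros t Ht. apply Hphidc; lra.
    - intros t Ht. apply Hpos; lra.
    - intros eps He.
      assert (Hc : continuity_pt (fun t => -1 * S * Psi c0 c1 c2 al (phi t)) m).
      { eapply cp_dl. apply P_deriv; [exact Hal | apply Hpos; lra | apply Hphid; auto]. }
      destruct (lim_reg _ m Hc eps He) as [del [Hd K]].
      exists del. split; auto. intros t Ht. apply K. rewrite Rabs_right; lra.
    - apply (lim_psi0 (fun del t => b - del < t < b)); auto.
      intros eps He.
      destruct (deriv_within_cont h a b b (hd b) (Hdw b ltac:(lra)) eps He) as [del [Hd K]].
      exists (Rmin del (b - m)). split; [apply Rmin_pos; lra|].
      intros t Ht. pose proof (Rmin_l del (b - m)). pose proof (Rmin_r del (b - m)).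
      split. apply Hpos; lra.
      specialize (K t ltac:(lra) ltac:(rewrite Rabs_left; lra)).
      apply Rabs_def2 in K. unfold phi; lra. }
  set (F1 := fun t => Rpower (h b - h t) (al - 1) * hd t * g t).
  set (F3 := fun t => Rpower (h b - h t) (al - 1) * hd t * (g t * f (h t))).
  assert (HK : forall t, m < t < b -> 0 <= Rpower (h b - h t) (al - 1) * hd t).
  { intros t Ht. apply Rmult_le_pos. left; apply rpow_pos. apply Hhd0; lra. }
  assert (CR : forall t, m < t < b -> continuity_pt (fun t => Rpower (h b - h t) (al - 1) * hd t) t).
  { intros t Ht. apply (cp_mul (fun t => Rpower (h b - h t) (al - 1)) hd).
    - apply (cp_comp phi (fun x => Rpower x (al - 1))).
      eapply cp_dl. apply Hphid; lra. eapply cp_dl. apply dl_rpow. apply Hpos; lra.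
    - apply Hhdc'; lra. }
  assert (CF1 : forall t, m < t < b -> continuity_pt F1 t).
  { intros t Ht. apply (cp_mul (fun t => Rpower (h b - h t) (al - 1) * hd t) g); auto.
    apply Hgc'; lra. }
  assert (CF3 : forall t, m < t < b -> continuity_pt F3 t).
  { intros t Ht. apply (cp_mul (fun t => Rpower (h b - h t) (al - 1) * hd t) (fun t => g t * f (h t))); auto.
    apply (cp_mul g (fun t => f (h t))). apply Hgc'; lra.
    apply (cp_comp h f). apply Hhc; lra. eapply cp_dl. apply Hf.
    pose proof (Hrng t ltac:(lra)). lra. }
  destruct (IMP_dom F1 (Ig phi phid (-1) S 1 0 0 al) m b (0 - (-1) * S * Psi 1 0 0 al (phi m)) ltac:(lra) (int_cont F1 m b CF1)) as [l1 IF1].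
  { intros t Ht. unfold F1, Ig, phi, phid. specialize (HK t Ht). specialize (HS t ltac:(lra)).
    rewrite Rabs_mult, (Rabs_right (Rpower _ _ * hd t)) by lra.
    replace (-1 * S * (Rpower (h b - h t) (al - 1) * (1 + 0 * (h b - h t) + 0 * (h b - h t) * (h b - h t)) * - hd t))
      with (Rpower (h b - h t) (al - 1) * hd t * S) by ring.
    apply Rmult_le_compat_l; auto. }
  { apply IG. }
  set (c0 := Lm (h b) - Lm (h m)). set (c1 := - B). set (c2 := (B - A) / (2 * (h b - h a))).
  set (E := fun t => f (h m) * F1 t + (-1) * F3 t).
  assert (CE : forall t, m < t < b -> continuity_pt E t).
  { intros t Ht. apply (cp_add (fun t => f (h m) * F1 t) (fun t => (-1) * F3 t)).
    apply (cp_mul (fun _ => f (h m))). apply cp_cst. auto.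
    apply (cp_mul (fun _ => -1)). apply cp_cst. auto. }
  assert (HEb : forall t, m < t < b -> Rabs (E t) <= Ig phi phid (-1) S c0 c1 c2 al t).
  { intros t Ht. unfold E, F1, F3, Ig, phi, phid.
    specialize (HK t Ht). specialize (HS t ltac:(lra)).
    pose proof (Hrng t ltac:(lra)). pose proof (Hrng m ltac:(lra)).
    assert (Hht : h m <= h t) by (left; apply Hmon; lra).
    pose proof (mvt_bound f fd (h a) (h b) cc dd Hhab Hcc Hdd Hf Hcv (h m) (h t) ltac:(lra) Hht ltac:(lra)) as Hmv.
    fold A B Lm in Hmv. rewrite Rabs_minus_sym in Hmv.
    replace (f (h m) * (Rpower (h b - h t) (al - 1) * hd t * g t) +
             -1 * (Rpower (h b - h t) (al - 1) * hd t * (g t * f (h t))))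
      with ((Rpower (h b - h t) (al - 1) * hd t) * (g t * (f (h m) - f (h t)))) by ring.
    replace (-1 * S * (Rpower (h b - h t) (al - 1) * (c0 + c1 * (h b - h t) + c2 * (h b - h t) * (h b - h t)) * - hd t))
      with ((Rpower (h b - h t) (al - 1) * hd t) * (S * (Lm (h t) - Lm (h m)))).
    2:{ unfold c0, c1, c2, Lm, Lam. field. lra. }
    rewrite Rabs_mult, (Rabs_right (Rpower _ _ * hd t)) by lra.
    apply Rmult_le_compat_l; auto. rewrite Rabs_mult.
    apply Rmult_le_compat; auto using Rabs_pos. }
  destruct (IMP_dom E (Ig phi phid (-1) S c0 c1 c2 al) m b (0 - (-1) * S * Psi c0 c1 c2 al (phi m)) ltac:(lra) (int_cont E m b CE) HEb (IG c0 c1 c2))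
    as [lE IE].
  assert (IF3 : IMP F3 m b (f (h m) * l1 + (-1) * lE)).
  { apply IMP_ext with (fun t => f (h m) * F1 t + (-1) * E t).
    - intros t _. unfold E. ring.
    - apply IMP_lin; auto. }
  rewrite (IMP_impint F1 m b l1 ltac:(lra) IF1).
  rewrite (IMP_impint F3 m b _ ltac:(lra) IF3).
  replace (f (h m) * l1 - (f (h m) * l1 + -1 * lE)) with lE by ring.
  assert (lE <= 0 - (-1) * S * Psi c0 c1 c2 al (phi m)).
  { apply (IMP_le E (Ig phi phid (-1) S c0 c1 c2 al) m b); auto. lra.
    intros t Ht. specialize (HEb t Ht). apply Rabs_def2b in HEb. lra. }
  assert (- lE <= 0 - (-1) * S * Psi c0 c1 c2 al (phi m)).
  { replace (- lE) with ((-1) * lE + 0 * lE) by ring.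
    apply (IMP_le (fun t => (-1) * E t + 0 * E t) (Ig phi phid (-1) S c0 c1 c2 al) m b); auto. lra.
    apply IMP_lin; auto.
    intros t Ht. specialize (HEb t Ht). apply Rabs_def2b in HEb. lra. }
  unfold phi in *. apply Rabs_le. lra.
Qed.

Definition IMPi (F : R -> R) (c l : R) : Prop :=
  (forall x y, c < x -> x <= y -> ex_RInt F x y) /\
  forall eps, 0 < eps -> exists del, 0 < del /\ exists M, c + del <= M /\
    forall x y, c < x < c + del -> M < y -> Rabs (RInt F x y - l) < eps.

Lemma IMPi_is F c l : IMPi F c l -> is_impint_inf F c l.
Proof.
  intros [Hi Hl]. split.
  - intros x y Hx Hxy. constructor. apply ex_RInt_Reals_0. apply Hi; auto.
  - intros eps He. destruct (Hl eps He) as [del [Hd [M [HM H]]]].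
    exists del. split; auto. exists M. intros x y pr Hx Hy.
    rewrite <- (RInt_Reals F x y pr). apply H; auto.
Qed.

Lemma is_IMPi F c l : is_impint_inf F c l -> IMPi F c l.
Proof.
  intros [Hi Hl]. split.
  - intros x y Hx Hxy. destruct (Hi x y Hx Hxy) as [pr].
    apply ex_RInt_Reals_1. exact pr.
  - intros eps He. destruct (Hl eps He) as [del [Hd [M H]]].
    exists del. split; auto. exists (Rmax M (c + del)). split; [apply Rmax_r|].
    intros x y Hx Hy.
    pose proof (Rmax_l M (c + del)). pose proof (Rmax_r M (c + del)).
    destruct (Hi x y ltac:(lra) ltac:(lra)) as [pr].
    rewrite (RInt_Reals F x y pr). apply H; lra.
Qed.

Lemma IMPi_unique F c l1 l2 : IMPi F c l1 -> IMPi F c l2 -> l1 = l2.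
Proof.
  intros [_ H1] [_ H2].
  apply Rminus_diag_uniq. apply Rabs_eq_0.
  apply Rle_antisym; [|apply Rabs_pos].
  apply le_epsilon. intros eps He.
  destruct (H1 (eps/2) ltac:(lra)) as [d1 [Hd1 [M1 [HM1 K1]]]].
  destruct (H2 (eps/2) ltac:(lra)) as [d2 [Hd2 [M2 [HM2 K2]]]].
  pose proof (Rmin_l d1 d2). pose proof (Rmin_r d1 d2).
  assert (0 < Rmin d1 d2) by (apply Rmin_pos; auto).
  set (x := c + Rmin d1 d2 / 2). set (y := Rmax M1 M2 + 1).
  pose proof (Rmax_l M1 M2). pose proof (Rmax_r M1 M2).
  specialize (K1 x y ltac:(unfold x; lra) ltac:(unfold y; lra)).
  specialize (K2 x y ltac:(unfold x; lra) ltac:(unfold y; lra)).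
  replace (l1 - l2) with (-(RInt F x y - l1) + (RInt F x y - l2)) by ring.
  eapply Rle_trans. apply Rabs_triang. rewrite Rabs_Ropp. lra.
Qed.

Lemma IMPi_bound H c l : IMPi H c l -> (forall t, c < t -> 0 <= H t) ->
  forall x y, c < x -> x <= y -> RInt H x y <= l.
Proof.
  intros [I K] Hp x y Hx Hxy. apply le_epsilon. intros eps He.
  destruct (K eps He) as [del [Hd [M [HM K1]]]].
  pose proof (Rmin_l del (x - c)). pose proof (Rmin_r del (x - c)).
  assert (0 < Rmin del (x - c)) by (apply Rmin_pos; lra).
  pose (x' := c + Rmin del (x - c) / 2). pose (y' := Rmax M y + 1).
  assert (Ex' : x' = c + Rmin del (x - c) / 2) by reflexivity.
  assert (Ey' : y' = Rmax M y + 1) by reflexivity. clearbody x' y'.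
  pose proof (Rmax_l M y). pose proof (Rmax_r M y).
  specialize (K1 x' y' ltac:(lra) ltac:(lra)).
  apply Rabs_def2 in K1.
  assert (RInt H x y <= RInt H x' y').
  { apply (RInt_mono_int H c (y' + 1)); try (lra).
    intros u v Hu Huv Hv. apply I; lra. intros t Ht; apply Hp; lra. }
  lra.
Qed.

Lemma IMPi_mono H c B :
  (forall x y, c < x -> x <= y -> ex_RInt H x y) ->
  (forall t, c < t -> 0 <= H t) ->
  (forall x y, c < x -> x <= y -> RInt H x y <= B) ->
  exists l, IMPi H c l.
Proof.
  intros I Hp HB.
  set (E := fun v => exists x y, c < x /\ x <= y /\ v = RInt H x y).
  assert (Hb : bound E).
  { exists B. intros v [x [y [? [? ->]]]]. apply HB; auto. }
  assert (Hne : exists v, E v).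
  { exists (RInt H (c + 1) (c + 1)). exists (c + 1), (c + 1). repeat split; lra. }
  destruct (completeness E Hb Hne) as [l [Hub Hlub]].
  exists l. split; auto.
  intros eps He.
  assert (Hex : exists x0 y0, c < x0 /\ x0 <= y0 /\ l - eps < RInt H x0 y0).
  { apply Classical_Prop.NNPP. intros Hn.
    assert (l <= l - eps); [|lra].
    apply Hlub. intros v [x [y [? [? ->]]]].
    apply Rnot_lt_le. intros Hlt. apply Hn. exists x, y. auto. }
  destruct Hex as [x0 [y0 [Hx0 [Hxy0 Hv]]]].
  exists (x0 - c). split; [lra|]. exists y0. split; [lra|].
  intros x y Hx Hy.
  assert (RInt H x0 y0 <= RInt H x y).
  { apply (RInt_mono_int H c (y + 1)); try lra.
    intros u v Hu Huv Hv'. apply I; lra. intros t Ht; apply Hp; lra. }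
  assert (RInt H x y <= l) by (apply Hub; exists x, y; repeat split; lra).
  apply Rabs_def1; lra.
Qed.

Lemma exp_pow_INR u n : exp u ^ n = exp (INR n * u).
Proof.
  induction n as [|n IH].
  - simpl. rewrite Rmult_0_l, exp_0. reflexivity.
  - rewrite S_INR. simpl pow. rewrite IH.
    replace ((INR n + 1) * u) with (u + INR n * u) by ring. rewrite exp_plus. reflexivity.
Qed.

Lemma poly_exp_bound n t : 1 <= t -> t ^ n * exp (- t) <= INR (S n) ^ (S n) / t.
Proof.
  intros Ht.
  set (k := INR (S n)).
  assert (Hk : 0 < k) by (unfold k; apply lt_0_INR; lia).
  assert (E1 : exp t = exp (t / k) ^ (S n)).
  { rewrite exp_pow_INR. fold k. f_equal. field. lra. }
  assert (E2 : (t / k) ^ (S n) <= exp (t / k) ^ (S n)).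
  { apply pow_incr. split. apply Rdiv_le_0_compat; lra.
    pose proof (exp_ineq1_le (t / k)). lra. }
  assert (Hr : (t / k) ^ (S n) = t * t ^ n * / k ^ (S n)).
  { unfold Rdiv. rewrite Rpow_mult_distr, pow_inv. simpl pow. ring. }
  assert (Htn : 0 < t ^ n) by (apply pow_lt; lra).
  assert (Hkn : 0 < k ^ (S n)) by (apply pow_lt; lra).
  assert (Hpos : 0 < t * t ^ n * / k ^ (S n)).
  { apply Rmult_lt_0_compat. apply Rmult_lt_0_compat; lra. apply Rinv_0_lt_compat; lra. }
  rewrite exp_Ropp, <- E1 in *. rewrite Hr in E2.
  pose proof (Rinv_le_contravar _ _ Hpos E2) as K.
  replace (/ (t * t ^ n * / k ^ S n)) with (k ^ S n / t / t ^ n) in K by (field; lra).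
  apply Rle_trans with (t ^ n * (k ^ S n / t / t ^ n)).
  - apply Rmult_le_compat_l; lra.
  - right. field. lra.
Qed.

Lemma dl_mul f g x lf lg : derivable_pt_lim f x lf -> derivable_pt_lim g x lg ->
  derivable_pt_lim (fun t => f t * g t) x (lf * g x + f x * lg).
Proof. intros H1 H2. exact (derivable_pt_lim_mult f g x lf lg H1 H2). Qed.

Lemma dl_opp f x l : derivable_pt_lim f x l -> derivable_pt_lim (fun t => - f t) x (- l).
Proof. intros H. exact (derivable_pt_lim_opp f x l H). Qed.

Lemma dl_expo x : derivable_pt_lim (fun t => exp (- t)) x (- exp (- x)).
Proof. apply is_derive_Reals. auto_derive; auto. ring. Qed.

Lemma RInt_FTC P F x y : x <= y ->
  (forall t, x <= t <= y -> derivable_pt_lim P t (F t)) ->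
  (forall t, x <= t <= y -> continuity_pt F t) -> RInt F x y = P y - P x.
Proof.
  intros Hxy HD HC. apply is_RInt_unique.
  apply (@is_RInt_derive R_CompleteNormedModule P F x y).
  - intros z Hz. rewrite Rmin_left in Hz by lra. rewrite Rmax_right in Hz by lra.
    apply is_derive_Reals. apply HD; lra.
  - intros z Hz. rewrite Rmin_left in Hz by lra. rewrite Rmax_right in Hz by lra.
    apply continuity_pt_filterlim. apply HC; lra.
Qed.

Lemma rpow_1_l s : Rpower 1 s = 1.
Proof. unfold Rpower. rewrite ln_1, Rmult_0_r, exp_0. reflexivity. Qed.

Lemma cont_F0 s t : 0 < t -> continuity_pt (fun t => Rpower t s * exp (- t)) t.
Proof.
  intros Ht. apply (cp_mul (fun t => Rpower t s) (fun t => exp (- t))).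
  eapply cp_dl. apply dl_rpow; auto. eapply cp_dl. apply dl_expo.
Qed.

Lemma F_bound s n t : s <= INR n -> 1 <= t ->
  Rpower t s * exp (- t) <= INR (S n) ^ (S n) / t.
Proof.
  intros Hs Ht.
  apply Rle_trans with (t ^ n * exp (- t)); [|apply poly_exp_bound; auto].
  apply Rmult_le_compat_r. left; apply exp_pos.
  rewrite <- Rpower_pow by lra. apply Rle_Rpower; auto.
Qed.

Lemma Gamma_ex s : 0 < s -> exists l, IMPi (fun t => Rpower t (s - 1) * exp (- t)) 0 l.
Proof.
  intros Hs.
  set (F0 := fun t => Rpower t (s - 1) * exp (- t)).
  destruct (INR_unbounded s) as [n Hn].
  set (K := INR (S (S n)) ^ (S (S n))).
  assert (HK : 0 < K) by (unfold K; apply pow_lt; apply lt_0_INR; lia).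
  assert (HF0 : forall t, 0 < t -> 0 <= F0 t).
  { intros t Ht. unfold F0. apply Rmult_le_pos; left; [apply rpow_pos|apply exp_pos]. }
  assert (I : forall x y, 0 < x -> x <= y -> ex_RInt F0 x y).
  { intros x y Hx Hxy. apply (int_cont F0 0 (y + 1)); try lra.
    intros t Ht. apply cont_F0; lra. }
  apply (IMPi_mono F0 0 (/ s + K)); auto.
  intros x y Hx Hxy.
  assert (Ex : exists x', 0 < x' /\ x' <= x /\ x' <= 1).
  { exists (Rmin x 1). split; [apply Rmin_pos; lra|]. split; [apply Rmin_l|apply Rmin_r]. }
  assert (Ey : exists y', y <= y' /\ 1 <= y').
  { exists (Rmax y 1). split; [apply Rmax_l|apply Rmax_r]. }
  destruct Ex as [x' [Hx' [Hx'1 Hx'2]]]. destruct Ey as [y' [Hy'1 Hy'2]].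
  apply Rle_trans with (RInt F0 x' y').
  { apply (RInt_mono_int F0 0 (y' + 1)); try lra.
    intros u v Hu Huv Hv. apply I; lra. intros t Ht. apply HF0; lra. }
  rewrite <- (@RInt_Chasles R_CompleteNormedModule F0 x' 1 y') by (apply I; lra).
  simpl. unfold plus; simpl.
  assert (B1 : RInt F0 x' 1 <= / s).
  { apply Rle_trans with (RInt (fun t => Rpower t (s - 1)) x' 1).
    - apply RInt_le; [lra| apply I; lra| |].
      + apply (int_cont _ 0 2); try (lra). intros t Ht.
        eapply cp_dl. apply dl_rpow; lra.
      + intros t Ht. unfold F0. rewrite <- (Rmult_1_r (Rpower t (s - 1))) at 2.
        apply Rmult_le_compat_l. left; apply rpow_pos.
        rewrite <- exp_0. left. apply exp_increasing. lra.
    - rewrite (RInt_FTC (fun t => / s * Rpower t s)); [| lra | |].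
      + rewrite rpow_1_l. pose proof (rpow_pos x' s).
        assert (0 < / s) by (apply Rinv_0_lt_compat; lra).
        assert (0 < / s * Rpower x' s) by (apply Rmult_lt_0_compat; lra). lra.
      + intros t Ht. apply dl_eq with (/ s * (s * Rpower t (s - 1))).
        apply dl_sc. apply dl_rpow. lra. field. lra.
      + intros t Ht. eapply cp_dl. apply dl_rpow; lra. }
  assert (B2 : RInt F0 1 y' <= K).
  { apply Rle_trans with (RInt (fun t => K / (t * t)) 1 y').
    - apply RInt_le; [lra| apply I; lra| |].
      + apply (int_cont _ 0 (y' + 1)); try (lra). intros t Ht.
        apply (cp_mul (fun _ => K) (fun t => / (t * t))). apply cp_cst.
        apply continuity_pt_inv. apply (cp_mul (fun t => t) (fun t => t)); apply continuity_pt_id.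
        apply Rgt_not_eq. nra.
      + intros t Ht. unfold F0.
        apply Rle_trans with (t ^ n * exp (- t)).
        * apply Rmult_le_compat_r. left; apply exp_pos.
          rewrite <- Rpower_pow by lra. apply Rle_Rpower; lra.
        * pose proof (poly_exp_bound (S n) t ltac:(lra)) as PB. fold K in PB.
          replace (t ^ n * exp (- t)) with (t ^ S n * exp (- t) / t) by (simpl; field; lra).
          replace (K / (t * t)) with (K / t / t) by (field; lra).
          unfold Rdiv. apply Rmult_le_compat_r. left; apply Rinv_0_lt_compat; lra. exact PB.
    - rewrite (RInt_FTC (fun t => - K / t)); [| lra | |].
      + assert (0 < K / y') by (apply Rdiv_lt_0_compat; lra).
        replace (- K / y' - - K / 1) with (K - K / y') by (field; lra). lra.
      + intros t Ht. apply is_derive_Reals. auto_derive. lra. field. lra.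
      + intros t Ht. apply (cp_mul (fun _ => K) (fun t => / (t * t))). apply cp_cst.
        apply continuity_pt_inv. apply (cp_mul (fun t => t) (fun t => t)); apply continuity_pt_id.
        apply Rgt_not_eq. nra. }
  lra.
Qed.

Lemma Gamma_val s l : IMPi (fun t => Rpower t (s - 1) * exp (- t)) 0 l -> Gamma s = l.
Proof.
  intros H. unfold Gamma. apply choose_R_eq.
  - apply IMPi_is; auto.
  - intros l' H'. apply (IMPi_unique (fun t => Rpower t (s - 1) * exp (- t)) 0); auto. apply is_IMPi; auto.
Qed.

Lemma Gamma_rec s l : 0 < s -> IMPi (fun t => Rpower t (s - 1) * exp (- t)) 0 l ->
  IMPi (fun t => Rpower t s * exp (- t)) 0 (s * l).
Proof.
  intros Hs [I0 K0].
  set (F0 := fun t => Rpower t (s - 1) * exp (- t)).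
  set (F1 := fun t => Rpower t s * exp (- t)).
  assert (I1 : forall x y, 0 < x -> x <= y -> ex_RInt F1 x y).
  { intros x y Hx Hxy. apply (int_cont F1 0 (y + 1)); try lra.
    intros t Ht. apply cont_F0; lra. }
  split; auto.
  assert (Heq : forall x y, 0 < x -> x <= y ->
     RInt F1 x y = s * RInt F0 x y + ((- (Rpower y s * exp (- y))) - (- (Rpower x s * exp (- x))))).
  { intros x y Hx Hxy.
    assert (E1 : RInt (fun t => 1 * F1 t + (- s) * F0 t) x y = - (Rpower y s * exp (- y)) - - (Rpower x s * exp (- x))).
    2:{ rewrite (RInt_lin F1 F0 x y 1 (- s)) in E1 by (apply I0 || apply I1; auto). lra. }
    apply (RInt_FTC (fun t => - (Rpower t s * exp (- t))) (fun t => 1 * F1 t + (- s) * F0 t) x y Hxy).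
    - intros t Ht. apply dl_eq with (- (s * Rpower t (s - 1) * exp (- t) + Rpower t s * - exp (- t))).
      + apply (dl_opp (fun t => Rpower t s * exp (- t))).
        apply (dl_mul (fun t => Rpower t s) (fun t => exp (- t))). apply dl_rpow; lra. apply dl_expo.
      + unfold F0, F1. ring.
    - intros t Ht. apply (cp_add (fun t => 1 * F1 t) (fun t => (- s) * F0 t)).
      apply (cp_mul (fun _ => 1)). apply cp_cst. apply cont_F0; lra.
      apply (cp_mul (fun _ => - s)). apply cp_cst. apply cont_F0; lra. }
  intros eps He.
  destruct (K0 (eps / (3 * s))) as [d0 [Hd0 [M0 [HM0 KK0]]]].
  { apply Rdiv_lt_0_compat; lra. }
  destruct (rpow_small s (eps / 3) Hs ltac:(lra)) as [d1 [Hd1 Kd1]].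
  destruct (INR_unbounded s) as [n Hn].
  set (C := INR (S n) ^ (S n)).
  assert (HC : 0 < C) by (unfold C; apply pow_lt; apply lt_0_INR; lia).
  set (del := Rmin d0 d1).
  assert (Hdel : 0 < del) by (unfold del; apply Rmin_pos; auto).
  pose proof (Rmin_l d0 d1). pose proof (Rmin_r d0 d1).
  set (M := Rmax (Rmax M0 (Rmax 1 (3 * C / eps))) del).
  pose proof (Rmax_l (Rmax M0 (Rmax 1 (3 * C / eps))) del).
  pose proof (Rmax_r (Rmax M0 (Rmax 1 (3 * C / eps))) del).
  pose proof (Rmax_l M0 (Rmax 1 (3 * C / eps))). pose proof (Rmax_r M0 (Rmax 1 (3 * C / eps))).
  pose proof (Rmax_l 1 (3 * C / eps)). pose proof (Rmax_r 1 (3 * C / eps)).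
  exists del. split; auto. exists M. split; [unfold M; lra|].
  intros x y Hx Hy.
  assert (Hy1 : 1 <= y) by (unfold M in Hy; lra).
  assert (HyC : 3 * C / eps < y) by (unfold M in Hy; lra).
  rewrite Heq by (unfold M, del in *; lra).
  specialize (KK0 x y ltac:(unfold del in *; lra) ltac:(unfold M in *; lra)).
  assert (Px : Rabs (- (Rpower x s * exp (- x))) < eps / 3).
  { rewrite Rabs_Ropp, Rabs_right.
    - apply Rle_lt_trans with (Rpower x s).
      + rewrite <- (Rmult_1_r (Rpower x s)) at 2. apply Rmult_le_compat_l. left; apply rpow_pos.
        rewrite <- exp_0. left. apply exp_increasing. lra.
      + apply Kd1. unfold del in *; lra.
    - left. apply Rmult_lt_0_compat. apply rpow_pos. apply exp_pos. }
  assert (Py : Rabs (- (Rpower y s * exp (- y))) < eps / 3).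
  { rewrite Rabs_Ropp, Rabs_right.
    - apply Rle_lt_trans with (C / y). apply F_bound; auto. lra.
      apply Rmult_lt_reg_r with y. lra.
      replace (C / y * y) with C by (field; lra).
      apply Rmult_lt_reg_r with (3 / eps). apply Rdiv_lt_0_compat; lra.
      replace (eps / 3 * y * (3 / eps)) with y by (field; lra).
      replace (C * (3 / eps)) with (3 * C / eps) by (field; lra). lra.
    - left. apply Rmult_lt_0_compat. apply rpow_pos. apply exp_pos. }
  replace (s * RInt F0 x y + (- (Rpower y s * exp (- y)) - - (Rpower x s * exp (- x))) - s * l)
    with (s * (RInt F0 x y - l) + (- (Rpower y s * exp (- y))) - (- (Rpower x s * exp (- x)))) by ring.
  assert (Rabs (s * (RInt F0 x y - l)) < eps / 3).
  { rewrite Rabs_mult, Rabs_right by lra.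
    apply Rlt_le_trans with (s * (eps / (3 * s))). apply Rmult_lt_compat_l; auto.
    right; field; lra. }
  eapply Rle_lt_trans. apply Rabs_triang.
  eapply Rle_lt_trans. apply Rplus_le_compat_r. apply Rabs_triang.
  rewrite (Rabs_Ropp (- (Rpower x s * exp (- x)))). lra.
Qed.

Lemma Gamma_facts s : 0 < s -> 0 < Gamma s /\ Gamma (s + 1) = s * Gamma s.
Proof.
  intros Hs. destruct (Gamma_ex s Hs) as [l Hl].
  rewrite (Gamma_val s l Hl).
  split.
  - apply Rlt_le_trans with (RInt (fun t => Rpower t (s - 1) * exp (- t)) 1 2).
    + apply RInt_gt_0. lra.
      intros t Ht. apply Rmult_lt_0_compat. apply rpow_pos. apply exp_pos.
      intros t Ht. apply continuity_pt_filterlim. apply cont_F0; lra.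
    + apply (IMPi_bound _ 0); auto; try lra.
      intros t Ht. apply Rmult_le_pos; left; [apply rpow_pos|apply exp_pos].
  - apply Gamma_val. replace (s + 1 - 1) with s by ring. apply Gamma_rec; auto.
Qed.

Lemma clamp_lip a b s t : a <= b ->
  Rabs (Rmax a (Rmin b s) - Rmax a (Rmin b t)) <= Rabs (s - t).
Proof.
  intros Hab. unfold Rmax, Rmin.
  repeat (destruct (Rle_dec _ _)); unfold Rabs; repeat (destruct (Rcase_abs _)); lra.
Qed.

Lemma clamp_in a b s : a <= b -> a <= Rmax a (Rmin b s) <= b.
Proof. intros Hab. unfold Rmax, Rmin. repeat (destruct (Rle_dec _ _)); lra. Qed.

Lemma clamp_id a b s : a <= s <= b -> Rmax a (Rmin b s) = s.
Proof. intros H. unfold Rmax, Rmin. repeat (destruct (Rle_dec _ _)); lra. Qed.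

Lemma sup_bound (g : R -> R) a b c d : a <= c -> c <= d -> d <= b -> cont_on g a b ->
  forall t, c <= t <= d -> Rabs (g t) <= sup_norm g c d.
Proof.
  intros Hac Hcd Hdb Hg.
  set (gg := fun t => Rabs (g (Rmax a (Rmin b t)))).
  assert (Cg : forall t, continuity_pt gg t).
  { intros t. apply cont_eps. intros eps He.
    assert (Hab : a <= b) by lra.
    destruct (Hg (Rmax a (Rmin b t)) (clamp_in a b t Hab) eps He) as [del [Hd K]].
    exists del. split; auto. intros s Hs. unfold gg.
    eapply Rle_lt_trans. apply Rabs_triang_inv2.
    apply K. apply clamp_in; auto.
    eapply Rle_lt_trans. apply clamp_lip; auto. exact Hs. }
  destruct (continuity_ab_maj gg c d Hcd (fun t _ => Cg t)) as [Mx [HM _]].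
  set (E := fun y => exists t, c <= t <= d /\ y = Rabs (g t)).
  assert (HE : exists l, is_lub E l).
  { destruct (completeness E) as [l Hl].
    - exists (gg Mx). intros y [t [Ht ->]].
      specialize (HM t Ht). unfold gg in HM. rewrite clamp_id in HM by lra. exact HM.
    - exists (Rabs (g c)). exists c. split; [lra|auto].
    - exists l; exact Hl. }
  pose proof (choose_R_P _ HE) as [Hub _].
  intros t Ht. apply Hub. exists t. auto.
Qed.

Theorem theorem2p1 (a b alpha : R) (h hd f fd g : R -> R) :
  a < b -> 0 < alpha ->
  (forall x y, a <= x <= b -> a <= y <= b -> x < y -> h x < h y) ->
  (forall t, a <= t <= b -> deriv_within h a b t (hd t)) ->
  cont_on hd a b ->
  (exists c d, c < h a /\ h b < d /\
     forall y, c < y < d -> derivable_pt_lim f y (fd y)) ->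
  Riemann_integrable fd (h a) (h b) ->
  convex_on (fun y => Rabs (fd y)) (h a) (h b) ->
  cont_on g a b ->
  let m := (a + b) / 2 in
  let D := h b - h a in
  let U := h m - h a in
  let V := h b - h m in
  let gf := fun t => g t * f (h t) in
  Rabs (f (h m) * (J_right alpha h hd g m a + J_left alpha h hd g m b)
        - (J_right alpha h hd gf m a + J_left alpha h hd gf m b))
  <= sup_norm g a m / (D * Gamma (alpha + 1)) *
       (Rabs (fd (h a)) * (D * Rpower U (alpha + 1) / (alpha + 1)
                           - Rpower U (alpha + 2) / (alpha + 2))
        + Rabs (fd (h b)) * (Rpower U (alpha + 2) / (alpha + 2)))
   + sup_norm g m b / (D * Gamma (alpha + 1)) *
       (Rabs (fd (h b)) * (D * Rpower V (alpha + 1) / (alpha + 1)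
                           - Rpower V (alpha + 2) / (alpha + 2))
        + Rabs (fd (h a)) * (Rpower V (alpha + 2) / (alpha + 2))).
Proof.
  intros Hab Hal Hmon Hdw Hhdc [cc [dd [Hcc [Hdd Hf]]]] _ Hcv Hgc m D U V gf.
  unfold gf, J_right, J_left. cbv beta.
  destruct (Gamma_facts alpha Hal) as [HG HG1].
  rewrite HG1.
  assert (Hm : a < m < b) by (unfold m; lra).
  assert (Hhab : h a < h b) by (apply Hmon; lra).
  assert (HU : 0 < U) by (unfold U; assert (h a < h m) by (apply Hmon; lra); lra).
  assert (HV : 0 < V) by (unfold V; assert (h m < h b) by (apply Hmon; lra); lra).
  assert (HD : 0 < D) by (unfold D; lra).
  pose proof (left_part a b alpha h hd f fd g cc dd (sup_norm g a m) Hab Hal Hmon Hdw Hhdc Hcc Hdd Hf Hcv Hgc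
    (sup_bound g a b a m ltac:(lra) ltac:(lra) ltac:(lra) Hgc)) as LB.
  pose proof (right_part a b alpha h hd f fd g cc dd (sup_norm g m b) Hab Hal Hmon Hdw Hhdc Hcc Hdd Hf Hcv Hgc
    (sup_bound g a b m b ltac:(lra) ltac:(lra) ltac:(lra) Hgc)) as RB.
  fold m in LB, RB. fold U in LB. fold V in RB.
  set (i1 := impint (fun t => Rpower (h t - h a) (alpha - 1) * hd t * g t) a m) in *.
  set (i3 := impint (fun t => Rpower (h t - h a) (alpha - 1) * hd t * (g t * f (h t))) a m) in *.
  set (i2 := impint (fun t => Rpower (h b - h t) (alpha - 1) * hd t * g t) m b) in *.
  set (i4 := impint (fun t => Rpower (h b - h t) (alpha - 1) * hd t * (g t * f (h t))) m b) in *.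
  set (A := Rabs (fd (h a))) in *. set (B := Rabs (fd (h b))) in *.
  set (S1 := sup_norm g a m) in *. set (S2 := sup_norm g m b) in *.
  assert (EU1 : Rpower U (alpha + 1) = Rpower U alpha * U) by (apply rpow_S; lra).
  assert (EU2 : Rpower U (alpha + 2) = Rpower U alpha * U * U).
  { replace (alpha + 2) with ((alpha + 1) + 1) by ring. rewrite !rpow_S by lra. ring. }
  assert (EV1 : Rpower V (alpha + 1) = Rpower V alpha * V) by (apply rpow_S; lra).
  assert (EV2 : Rpower V (alpha + 2) = Rpower V alpha * V * V).
  { replace (alpha + 2) with ((alpha + 1) + 1) by ring. rewrite !rpow_S by lra. ring. }
  assert (EQ1 : / Gamma alpha * (S1 * Psi (Lam (h a) (h b) A B (h m) - Lam (h a) (h b) A B (h a)) (- A)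
       ((A - B) / (2 * (h b - h a))) alpha U) =
     S1 / (D * (alpha * Gamma alpha)) * (A * (D * Rpower U (alpha + 1) / (alpha + 1) - Rpower U (alpha + 2) / (alpha + 2))
        + B * (Rpower U (alpha + 2) / (alpha + 2)))).
  { unfold Psi, Lam. rewrite EU1, EU2.
    replace (h m) with (h a + U) by (unfold U; ring). replace (h b) with (h a + D) by (unfold D; ring).
    field. lra. }
  assert (EQ2 : / Gamma alpha * (S2 * Psi (Lam (h a) (h b) A B (h b) - Lam (h a) (h b) A B (h m)) (- B)
       ((B - A) / (2 * (h b - h a))) alpha V) =
     S2 / (D * (alpha * Gamma alpha)) * (B * (D * Rpower V (alpha + 1) / (alpha + 1) - Rpower V (alpha + 2) / (alpha + 2))
        + A * (Rpower V (alpha + 2) / (alpha + 2)))).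
  { unfold Psi, Lam. rewrite EV1, EV2.
    replace (h m) with (h b - V) by (unfold V; ring). replace (h a) with (h b - D) by (unfold D; ring).
    field. lra. }
  rewrite <- EQ1, <- EQ2.
  replace (f (h m) * (/ Gamma alpha * i1 + / Gamma alpha * i2) - (/ Gamma alpha * i3 + / Gamma alpha * i4))
    with (/ Gamma alpha * ((f (h m) * i1 - i3) + (f (h m) * i2 - i4))) by ring.
  assert (HGi : 0 < / Gamma alpha) by (apply Rinv_0_lt_compat; lra).
  rewrite Rabs_mult, (Rabs_right (/ Gamma alpha)) by lra.
  rewrite <- Rmult_plus_distr_l. apply Rmult_le_compat_l; [lra|].
  eapply Rle_trans. apply Rabs_triang. lra.
Qed.
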